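(* Let $\gamma\ge1$ be an integer, $C\subset\{0,1,\dots,p^\gamma-1\}$ nonempty (viewed both as a subset of $\mathbb{Z}/p^\gamma\mathbb{Z}$ and of $\mathbb{Z}_p$), and $\Omega=\bigsqcup_{c\in C}(c+p^\gamma\mathbb{Z}_p)$. The following are equivalent: (i) $\Omega$ tiles $\mathbb{Z}_p$, i.e. there is $T\subset\mathbb{Z}_p$ such that $\mathbb{Z}_p$ is the disjoint union of the sets $\Omega+t$, $t\in T$; (ii) $C$ tiles $\mathbb{Z}/p^\gamma\mathbb{Z}$; (iii) $\Omega$ tiles $\mathbb{Q}_p$.
   Context: $p\ge2$ is a prime. $\mathfrak{m}$ is the Haar measure on $\mathbb{Q}_p$. $C$ tiles $\mathbb{Z}/p^\gamma\mathbb{Z}$ if there is $S\subset\mathbb{Z}/p^\gamma\mathbb{Z}$ such that every element of $\mathbb{Z}/p^\gamma\mathbb{Z}$ is uniquely written as $c+s$ with $c\in C$, $s\in S$. $\Omega$ tiles $\mathbb{Q}_p$ if there is $T\subset\mathbb{Q}_p$ with $\sum_{t\in T}1_\Omega(x-t)=1$ for $\mathfrak{m}$-a.e. $x$. *)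

(* Defs.v *)
From HB Require Import structures.
From mathcomp Require Import all_boot all_order all_algebra.
Unset Printing Implicit Defensive.
Import Order.TTheory GRing.Theory Num.Theory.
Local Open Scope ring_scope.

Definition ppow (p : nat) (n : int) : rat := (p%:R : rat) ^ n.

Definition Zinvp (p : nat) (q : rat) : Prop :=
  exists k : nat, q * (p%:R ^+ k) \is a Num.int.

(* An element x of Q_p is represented by the family of its residues
   x mod p^n Z_p (n : int), each residue being given by its canonical
   representative in Z[1/p] /\ [0, p^n)   (Q_p / p^n Z_p = Z[1/p] / p^n Z). *)
Definition Qpseq := int -> rat.

Definition is_Qp (p : nat) (x : Qpseq) : Prop :=
  [/\ forall n, Zinvp p (x n),
      forall n, 0 <= x n < ppow p n,
      forall n, (x (n + 1) - x n) / ppow p n \is a Num.int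
    & exists N : int, forall n, n <= N -> x n = 0].

Definition qadd (p : nat) (x y : Qpseq) : Qpseq :=
  fun n => let s := x n + y n in if s < ppow p n then s else s - ppow p n.
Definition qopp (p : nat) (x : Qpseq) : Qpseq :=
  fun n => if x n == 0 then 0 else ppow p n - x n.
Definition qsub (p : nat) (x y : Qpseq) : Qpseq := qadd p x (qopp p y).
(* multiplication by p^k *)
Definition qscale (p : nat) (k : int) (x : Qpseq) : Qpseq :=
  fun n => ppow p k * x (n - k).
Definition qofnat (p : nat) (c : nat) : Qpseq :=
  fun n => match n with Posz k => ((c %% p ^ k)%N)%:R | Negz _ => 0 end.

(* Z_p = { x in Q_p | x = 0 mod Z_p } *)
Definition in_Zp (p : nat) (x : Qpseq) : Prop := is_Qp p x /\ x 0 = 0.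

Definition ball (p : nat) (a : Qpseq) (k : int) : Qpseq -> Prop :=
  fun x => exists z, in_Zp p z /\ x = qadd p a (qscale p k z).

Definition Omega (p gamma : nat) (C : {set 'Z_(p ^ gamma)%N}) : Qpseq -> Prop :=
  fun x => exists c, c \in C /\ ball p (qofnat p (val c)) gamma%:Z x.

(* Haar-null subsets of Q_p: coverable by countably many balls of total
   Haar measure (m(a + p^k Z_p) = p^(-k)) at most eps, for every eps > 0 *)
Definition haar_null (p : nat) (N : Qpseq -> Prop) : Prop :=
  forall eps : rat, 0 < eps ->
    exists (a : nat -> Qpseq) (k : nat -> int),
      [/\ forall i, is_Qp p (a i),
          forall x, N x -> exists i, ball p (a i) (k i) x
        & forall m, \sum_(i < m) ppow p (- k i) <= eps].

(* Omega tiles Q_p: sum_{t in T} 1_Omega(x - t) = 1 for a.e. x, i.e. for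
   almost every x there is exactly one t in T with x - t in Omega *)
Definition tiles_Qp (p : nat) (Om : Qpseq -> Prop) : Prop :=
  exists T : Qpseq -> Prop,
    (forall t, T t -> is_Qp p t) /\
    haar_null p (fun x => is_Qp p x /\ ~ (exists! t, T t /\ Om (qsub p x t))).

Definition tiles_Zp (p : nat) (Om : Qpseq -> Prop) : Prop :=
  exists T : Qpseq -> Prop,
    [/\ forall t, T t -> in_Zp p t,
        forall t w, T t -> Om w -> in_Zp p (qadd p w t)
      & forall x, in_Zp p x ->
          exists! t, T t /\ exists w, Om w /\ x = qadd p w t].

Definition tiles_Zmod (n : nat) (C : {set 'Z_n}) : Prop :=
  exists S : {set 'Z_n}, forall x : 'Z_n,
    exists! cs : 'Z_n * 'Z_n, [/\ cs.1 \in C, cs.2 \in S & x = cs.1 + cs.2].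

(* Main.v *)
Require Import Defs.
From HB Require Import structures.
From mathcomp Require Import all_boot all_order all_algebra.
From mathcomp Require Import zify ring lra.
From Stdlib Require Import FunctionalExtensionality ClassicalEpsilon Classical.
Unset Printing Implicit Defensive.
Set Implicit Arguments. Unset Strict Implicit.
Import Order.TTheory GRing.Theory Num.Theory.
Local Open Scope ring_scope.

Lemma int_lt1 (x y : rat) : x \is a Num.int -> y \is a Num.int -> x < y + 1 -> x <= y.
Proof.
move=> /intrP[m ->] /intrP[n ->]; rewrite -(intrD _ n 1) !ltr_int !ler_int => h; lia.
Qed.

Lemma int_eq0 (x : rat) : x \is a Num.int -> -1 < x < 1 -> x = 0.
Proof.
move=> xi /andP[h1 h2].
have a : x <= 0 by apply: int_lt1 => //; rewrite add0r.
have b : -1 <= x - 1.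
  apply: int_lt1; rewrite ?rpredB ?rpredN //; lra.
lra.
Qed.

Lemma pnz (p : nat) : (0 < p)%N -> (p%:R : rat) \is a GRing.unit.
Proof. by move=> hp; rewrite unitfE pnatr_eq0 -lt0n. Qed.

Lemma ppow_gt0 p n : (0 < p)%N -> 0 < ppow p n.
Proof. by move=> hp; apply: exprz_gt0; rewrite ltr0n. Qed.

Lemma ppowD p m n : (0 < p)%N -> ppow p (m + n) = ppow p m * ppow p n.
Proof. by move=> hp; rewrite /ppow exprzDr // pnz. Qed.

Lemma ppow0 p : ppow p 0 = 1.
Proof. by rewrite /ppow expr0z. Qed.

Lemma ppow1 p : ppow p 1 = p%:R.
Proof. by rewrite /ppow expr1z. Qed.

Lemma ppow_nat p (k : nat) : ppow p k = p%:R ^+ k.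
Proof. by rewrite /ppow. Qed.

Lemma ppowN p n : (0 < p)%N -> ppow p (- n) = (ppow p n)^-1.
Proof. by move=> hp; rewrite /ppow invr_expz. Qed.

Lemma ppowS p n : (0 < p)%N -> ppow p (n + 1) = ppow p n * p%:R.
Proof. by move=> hp; rewrite ppowD // ppow1. Qed.

Lemma ppow_int p n : 0 <= n -> ppow p n \is a Num.int.
Proof.
case: n => // k _; rewrite ppow_nat; apply: rpredX; exact: intr_nat (natr_nat _ _).
Qed.

Lemma ppow_div p m n : (0 < p)%N -> m <= n -> ppow p n / ppow p m \is a Num.int.
Proof.
move=> hp hmn; have -> : n = m + (n - m) by rewrite addrC subrK.
rewrite ppowD // mulrC mulrA mulVf ?mul1r; first by apply: ppow_int; rewrite subr_ge0.
by rewrite gt_eqF // ppow_gt0.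
Qed.

Lemma ppow_le p m n : (0 < p)%N -> m <= n -> ppow p m <= ppow p n.
Proof.
move=> hp hmn; have -> : n = m + (n - m) by rewrite addrC subrK.
rewrite ppowD //.
have h0 := @ppow_gt0 p m hp.
suff h1 : 1 <= ppow p (n - m) by rewrite -[X in X <= _]mulr1 ler_pM2l.
have : 0 <= n - m by rewrite subr_ge0.
move: (n - m) => d; case: d => // k _; rewrite ppow_nat exprn_ege1 // ler1n; exact: hp.
Qed.

Lemma Zinvp_int p (q : rat) : q \is a Num.int -> Zinvp p q.
Proof. by move=> h; exists 0%N; rewrite expr0 mulr1. Qed.

Lemma Zinvp_mulpow (p : nat) (q : rat) k l : q * (p%:R ^+ k) \is a Num.int -> (k <= l)%N ->
  q * (p%:R ^+ l) \is a Num.int.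
Proof.
move=> h hkl; rewrite -(subnKC hkl) exprD mulrA rpredM //.
apply: rpredX; exact: intr_nat (natr_nat _ _).
Qed.

Lemma Zinvp_add p a b : Zinvp p a -> Zinvp p b -> Zinvp p (a + b).
Proof.
move=> [k hk] [l hl]; exists (maxn k l); rewrite mulrDl rpredD //.
  by apply: Zinvp_mulpow hk _; rewrite leq_maxl.
by apply: Zinvp_mulpow hl _; rewrite leq_maxr.
Qed.

Lemma Zinvp_opp p a : Zinvp p a -> Zinvp p (- a).
Proof. by move=> [k hk]; exists k; rewrite mulNr rpredN. Qed.

Lemma Zinvp_sub p a b : Zinvp p a -> Zinvp p b -> Zinvp p (a - b).
Proof. by move=> ha hb; apply: Zinvp_add => //; apply: Zinvp_opp. Qed.

Lemma Zinvp_mul p a b : Zinvp p a -> Zinvp p b -> Zinvp p (a * b).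
Proof.
move=> [k hk] [l hl]; exists (addn k l).
rewrite exprD.
have -> : a * b * (p%:R ^+ k * p%:R ^+ l) = (a * p%:R ^+ k) * (b * p%:R ^+ l) by ring.
exact: rpredM.
Qed.

Lemma Zinvp_ppow p n : (0 < p)%N -> Zinvp p (ppow p n).
Proof.
move=> hp; case: n => k.
  by apply: Zinvp_int; apply: ppow_int.
exists k.+1; rewrite /ppow NegzE -exprnN mulVf ?rpred1 //.
by rewrite expf_neq0 // pnatr_eq0 -lt0n.
Qed.

Definition modq (q P : rat) : rat := q - P * (Num.floor (q / P))%:~R.

Lemma modq_ge0 (q P : rat) : 0 < P -> 0 <= modq q P.
Proof.
move=> hP; rewrite /modq subr_ge0 -ler_pdivlMl // mulrC; exact: floor_le.
Qed.

Lemma modq_lt (q P : rat) : 0 < P -> modq q P < P.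
Proof.
move=> hP; rewrite /modq; set f := Num.floor (q / P).
have h : q / P < f%:~R + 1 by have := floorD1_gt (q / P); rewrite intrD.
have e : q = P * (q / P) by rewrite mulrC divfK ?gt_eqF.
have : P * (q / P) < P * (f%:~R + 1) by rewrite ltr_pM2l.
rewrite -e; lra.
Qed.

Lemma modq_shift (b P z : rat) : 0 < P -> z \is a Num.int -> modq (b + P * z) P = modq b P.
Proof.
move=> hP hz; rewrite /modq mulrDl mulrAC divff ?gt_eqF // mul1r floorDrz //.
by rewrite intrD (floorK hz) mulrDr; ring.
Qed.

Lemma modq_small (a P : rat) : 0 <= a < P -> modq a P = a.
Proof.
move=> /andP[h0 h1]; have hP : 0 < P by apply: le_lt_trans h1.
rewrite /modq; suff -> : Num.floor (a / P) = 0 by rewrite mulr0 subr0.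
apply/eqP; rewrite floor_eq add0r.
rewrite -[(0:int)%:~R]/(0:rat) -[(1:int)%:~R]/(1:rat).
rewrite divr_ge0 //= ?(ltW hP) //.
by rewrite -(ltr_pM2r hP) mul1r divfK ?gt_eqF.
Qed.

Lemma modq_char (a b P : rat) : 0 <= a < P -> (b - a) / P \is a Num.int -> a = modq b P.
Proof.
move=> ha hi; have hP : 0 < P by case/andP: ha => h0 h1; apply: le_lt_trans h1.
have -> : b = a + P * ((b - a) / P) by rewrite mulrC divfK ?gt_eqF //; ring.
by rewrite modq_shift // modq_small.
Qed.

Lemma modq_diff (b P : rat) : 0 < P -> (b - modq b P) / P \is a Num.int.
Proof.
move=> hP; rewrite /modq; set f := Num.floor (b / P).
have -> : (b - (b - P * f%:~R)) / P = f%:~R by field; rewrite gt_eqF.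
exact: intr_int.
Qed.

Lemma modq_mod (b P Q : rat) : 0 < P -> 0 < Q -> Q / P \is a Num.int ->
  modq (modq b Q) P = modq b P.
Proof.
move=> hP hQ hi; apply/esym/modq_char; first by rewrite modq_ge0 ?modq_lt.
have -> : (modq b Q - modq b P) / P =
   (b - modq b P) / P - ((b - modq b Q) / Q) * (Q / P).
  by field; rewrite (gt_eqF hP) (gt_eqF hQ).
apply: rpredB; first exact: modq_diff.
by apply: rpredM => //; apply: modq_diff.
Qed.

Lemma QpZ p x n : is_Qp p x -> Zinvp p (x n).
Proof. by case=> h _ _ _. Qed.
Lemma Qp_ge0 p x n : is_Qp p x -> 0 <= x n.
Proof. by case=> _ h _ _; case/andP: (h n). Qed.
Lemma Qp_lt p x n : is_Qp p x -> x n < ppow p n.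
Proof. by case=> _ h _ _; case/andP: (h n). Qed.
Lemma Qp_cong p x n : is_Qp p x -> (x (n + 1) - x n) / ppow p n \is a Num.int.
Proof. by case=> _ _ h _. Qed.

Lemma Qp_step p x n : (0 < p)%N -> is_Qp p x -> x n = modq (x (n + 1)) (ppow p n).
Proof.
move=> hp hx; apply: modq_char; first by rewrite (Qp_ge0 _ hx) (Qp_lt _ hx).
exact: Qp_cong.
Qed.

Lemma Qp_down_nat p x m (d : nat) : (0 < p)%N -> is_Qp p x ->
  x m = modq (x (m + d)) (ppow p m).
Proof.
move=> hp hx; elim: d => [|d IH].
  by rewrite addr0 modq_small // (Qp_ge0 _ hx) (Qp_lt _ hx).
rewrite IH (Qp_step (m + d) hp hx) modq_mod ?ppow_gt0 //.
  by rewrite -addn1 PoszD addrA.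
by apply: ppow_div => //; rewrite lerDl.
Qed.

Lemma Qp_down p x m n : (0 < p)%N -> is_Qp p x -> m <= n ->
  x m = modq (x n) (ppow p m).
Proof.
move=> hp hx hmn; have : 0 <= n - m by rewrite subr_ge0.
have -> : n = m + (n - m) by rewrite addrC subrK.
rewrite addrC addKr; case: (n - m) => // d _.
by rewrite (Qp_down_nat m d hp hx).
Qed.

Lemma Qp_agree p x y m n : (0 < p)%N -> is_Qp p x -> is_Qp p y -> m <= n ->
  x n = y n -> x m = y m.
Proof.
by move=> hp hx hy hmn e; rewrite (Qp_down hp hx hmn) (Qp_down hp hy hmn) e.
Qed.

Definition addm (P a b : rat) : rat := if a + b < P then a + b else a + b - P.
Definition oppm (P a : rat) : rat := if a == 0 then 0 else P - a.

Lemma qaddE p x y n : qadd p x y n = addm (ppow p n) (x n) (y n).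
Proof. by []. Qed.
Lemma qoppE p x n : qopp p x n = oppm (ppow p n) (x n).
Proof. by []. Qed.
Lemma qsubE p x y n : qsub p x y n = addm (ppow p n) (x n) (oppm (ppow p n) (y n)).
Proof. by []. Qed.

Ltac noif t := lazymatch t with context [if _ then _ else _] => fail | _ => idtac end.
Ltac splitm := rewrite ?/addm ?/oppm;
  repeat (match goal with
    | |- context [if ?a < ?b then _ else _] => noif a; noif b;
        case: (ltrP a b) => ?; cbv beta iota
    | |- context [if ?a == ?b then _ else _] => noif a; noif b;
        case: (eqVneq a b) => [?|/lt_total/orP[?|?]]; cbv beta iota
  end); try lra.

Lemma addm_eps P a b : exists e : bool, addm P a b = a + b - e%:R * P.
Proof. rewrite /addm; case: ifP => _; [exists false | exists true]; rewrite /= ?mul0r ?mul1r ?subr0 //. Qed.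

Lemma oppm_eps P a : exists e : bool, oppm P a = e%:R * P - a.
Proof.
rewrite /oppm; case: eqP => [->|_]; [exists false | exists true];
  rewrite /= ?mul0r ?mul1r ?subr0 //.
Qed.

Lemma addm_range P a b : 0 <= a < P -> 0 <= b < P -> 0 <= addm P a b < P.
Proof. move=> /andP[? ?] /andP[? ?]; splitm. Qed.

Lemma oppm_range P a : 0 <= a < P -> 0 <= oppm P a < P.
Proof. move=> /andP[? ?]; splitm; subst. all: lra. Qed.

Lemma addm_oppK P a b : 0 <= a < P -> 0 <= b < P -> addm P (addm P a (oppm P b)) b = a.
Proof. move=> /andP[? ?] /andP[? ?]; splitm; subst; lra. Qed.

Lemma addm_oppK' P a b : 0 <= a < P -> 0 <= b < P -> addm P b (addm P a (oppm P b)) = a.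
Proof. move=> /andP[? ?] /andP[? ?]; splitm; subst; lra. Qed.

Lemma addm_oppv P a : 0 <= a < P -> addm P a (oppm P a) = 0.
Proof. move=> /andP[? ?]; splitm; subst; lra. Qed.

Lemma addm0 P a : 0 <= a < P -> addm P a 0 = a.
Proof. move=> /andP[? ?]; splitm. Qed.

Lemma nat_int (n : nat) : (n%:R : rat) \is a Num.int.
Proof. exact: intr_nat (natr_nat _ _). Qed.
Lemma bool_int (e : bool) : (e%:R : rat) \is a Num.int.
Proof. exact: nat_int. Qed.

Lemma iD (a b : rat) : a \is a Num.int -> b \is a Num.int -> a + b \is a Num.int.
Proof. exact: rpredD. Qed.
Lemma iB (a b : rat) : a \is a Num.int -> b \is a Num.int -> a - b \is a Num.int.
Proof. exact: rpredB. Qed.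
Lemma iM (a b : rat) : a \is a Num.int -> b \is a Num.int -> a * b \is a Num.int.
Proof. exact: rpredM. Qed.
Lemma iN (a : rat) : a \is a Num.int -> - a \is a Num.int.
Proof. by rewrite rpredN. Qed.
Ltac isint_with t := repeat first [solve [t] | apply: iB | apply: iD | apply: iM | apply: iN
  | apply: bool_int | apply: nat_int | apply: intr_int].
Ltac isint := isint_with fail.

Lemma ppow_ne0 p n : (0 < p)%N -> ppow p n != 0.
Proof. by move=> hp; rewrite gt_eqF // ppow_gt0. Qed.

Lemma pR_ne0 p : (0 < p)%N -> (p%:R : rat) != 0.
Proof. by move=> hp; rewrite pnatr_eq0 -lt0n. Qed.

Lemma is_Qp_add p x y : (0 < p)%N -> is_Qp p x -> is_Qp p y -> is_Qp p (qadd p x y).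
Proof.
move=> hp hx hy; split.
- move=> n; rewrite qaddE; have [e ->] := addm_eps (ppow p n) (x n) (y n).
  apply: Zinvp_sub; first by apply: Zinvp_add; apply: QpZ.
  by apply: Zinvp_mul; [apply: Zinvp_int; exact: bool_int | exact: Zinvp_ppow].
- move=> n; rewrite qaddE; apply: addm_range.
    by rewrite (Qp_ge0 _ hx) (Qp_lt _ hx).
  by rewrite (Qp_ge0 _ hy) (Qp_lt _ hy).
- move=> n; rewrite !qaddE.
  have [e ->] := addm_eps (ppow p n) (x n) (y n).
  have [e' ->] := addm_eps (ppow p (n + 1)) (x (n + 1)) (y (n + 1)).
  rewrite ppowS //.
  have -> : (x (n + 1) + y (n + 1) - e'%:R * (ppow p n * p%:R) - (x n + y n - e%:R * ppow p n)) / ppow p n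
    = (x (n + 1) - x n) / ppow p n + (y (n + 1) - y n) / ppow p n - e'%:R * p%:R + e%:R.
    by field; rewrite ppow_ne0.
  isint_with ltac:(first [apply: Qp_cong hx | apply: Qp_cong hy]).
- case: hx => _ _ _ [N1 h1]; case: hy => _ _ _ [N2 h2].
  exists (Num.min N1 N2) => n hn; rewrite qaddE h1 ?h2.
  + by rewrite addm0 // lexx ppow_gt0.
  + by apply: le_trans hn _; rewrite ge_min lexx orbT.
  + by apply: le_trans hn _; rewrite ge_min lexx.
Qed.

Lemma is_Qp_opp p x : (0 < p)%N -> is_Qp p x -> is_Qp p (qopp p x).
Proof.
move=> hp hx; split.
- move=> n; rewrite qoppE; have [e ->] := oppm_eps (ppow p n) (x n).
  apply: Zinvp_sub; last exact: QpZ.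
  by apply: Zinvp_mul; [apply: Zinvp_int; exact: bool_int | exact: Zinvp_ppow].
- move=> n; rewrite qoppE; apply: oppm_range.
  by rewrite (Qp_ge0 _ hx) (Qp_lt _ hx).
- move=> n; rewrite !qoppE.
  have [e ->] := oppm_eps (ppow p n) (x n).
  have [e' ->] := oppm_eps (ppow p (n + 1)) (x (n + 1)).
  rewrite ppowS //.
  have -> : (e'%:R * (ppow p n * p%:R) - x (n + 1) - (e%:R * ppow p n - x n)) / ppow p n
    = e'%:R * p%:R - e%:R - (x (n + 1) - x n) / ppow p n.
    by field; rewrite ppow_ne0.
  isint_with ltac:(apply: Qp_cong hx).
- case: hx => _ _ _ [N1 h1].
  by exists N1 => n hn; rewrite qoppE h1 // /oppm eqxx.
Qed.

Lemma is_Qp_sub p x y : (0 < p)%N -> is_Qp p x -> is_Qp p y -> is_Qp p (qsub p x y).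
Proof. by move=> hp hx hy; apply: is_Qp_add => //; apply: is_Qp_opp. Qed.

Lemma qscaleE p k x n : qscale p k x n = ppow p k * x (n - k).
Proof. by []. Qed.

Lemma is_Qp_scale p k x : (0 < p)%N -> is_Qp p x -> is_Qp p (qscale p k x).
Proof.
move=> hp hx; split.
- by move=> n; rewrite qscaleE; apply: Zinvp_mul; [apply: Zinvp_ppow | apply: QpZ].
- move=> n; rewrite qscaleE mulr_ge0 ?(Qp_ge0 _ hx) ?ltW ?ppow_gt0 //=.
  have -> : n = k + (n - k) by rewrite addrC subrK.
  rewrite ppowD // ltr_pM2l ?ppow_gt0 // addrC addKr; exact: (Qp_lt _ hx).
- move=> n; rewrite !qscaleE.
  have -> : n + 1 - k = (n - k) + 1 by rewrite addrAC.
  have -> : ppow p n = ppow p k * ppow p (n - k) by rewrite -ppowD // addrC subrK.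
  have -> : (ppow p k * x (n - k + 1) - ppow p k * x (n - k)) / (ppow p k * ppow p (n - k))
     = (x (n - k + 1) - x (n - k)) / ppow p (n - k).
    by field; rewrite !ppow_ne0.
  exact: Qp_cong.
- case: hx => _ _ _ [N1 h1].
  exists (N1 + k) => n hn; rewrite qscaleE h1 ?mulr0 //.
  by rewrite lerBlDr.
Qed.

Definition canon (p : nat) (q : rat) : Qpseq := fun n => modq q (ppow p n).

Lemma modq_Zinvp p q P : (0 < p)%N -> Zinvp p q -> Zinvp p P -> Zinvp p (modq q P).
Proof.
move=> hp hq hP; rewrite /modq; apply: Zinvp_sub => //; apply: Zinvp_mul => //.
apply: Zinvp_int; exact: intr_int.
Qed.

Lemma modq0 P : 0 < P -> modq 0 P = 0.
Proof. by move=> hP; rewrite modq_small // lexx. Qed.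

Lemma is_Qp_canon p q : (0 < p)%N -> Zinvp p q -> is_Qp p (canon p q).
Proof.
move=> hp hq; split.
- by move=> n; apply: modq_Zinvp => //; apply: Zinvp_ppow.
- by move=> n; rewrite /canon modq_ge0 ?modq_lt ?ppow_gt0.
- move=> n; rewrite /canon.
  have -> : (modq q (ppow p (n + 1)) - modq q (ppow p n)) / ppow p n =
     (q - modq q (ppow p n)) / ppow p n - (q - modq q (ppow p (n + 1))) / ppow p (n + 1) * p%:R.
    by rewrite ppowS //; field; rewrite ppow_ne0 // pR_ne0.
  by isint_with ltac:(apply: modq_diff; exact: ppow_gt0).
- case: hq => k hk; exists (- k%:Z) => n hn; rewrite /canon.
  have e : q = 0 + ppow p n * (q * p%:R ^+ k * ppow p (- n - k%:Z)).
    rewrite add0r -ppow_nat.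
    have -> : ppow p n * (q * ppow p k * ppow p (- n - k%:Z)) =
      q * (ppow p k * ppow p (- n - k%:Z) * ppow p n) by ring.
    rewrite -!ppowD //.
    have -> : k%:Z + (- n - k%:Z) + n = 0 by ring.
    by rewrite ppow0 mulr1.
  rewrite e modq_shift ?modq0 ?ppow_gt0 //.
  apply: iM => //; apply: ppow_int; rewrite subr_ge0 -lerNr //.
Qed.

Lemma qofnat_canon p c : (0 < p)%N -> qofnat p c = canon p c%:R.
Proof.
move=> hp; apply: functional_extensionality => n; rewrite /qofnat /canon.
case: n => k.
- apply: modq_char.
    rewrite ler0n /= ppow_nat -natrX ltr_nat ltn_pmod // expn_gt0 hp //.
  have hd : (0 < p ^ k)%N by rewrite expn_gt0 hp.
  rewrite {1}(divn_eq c (p ^ k)) natrD addrK natrM ppow_nat -natrX mulfK ?nat_int //.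
  by rewrite pnatr_eq0 -lt0n.
- apply: modq_char; first by rewrite lexx ppow_gt0.
  rewrite subr0 /ppow NegzE -exprnN invrK; isint.
  apply: rpredX; exact: nat_int.
Qed.

Lemma is_Qp_nat p c : (0 < p)%N -> is_Qp p (qofnat p c).
Proof. by move=> hp; rewrite qofnat_canon //; apply: is_Qp_canon => //; apply: Zinvp_int; apply: nat_int. Qed.

Lemma qofnat_lev p c (k : nat) : (c < p ^ k)%N -> qofnat p c k = c%:R.
Proof. by move=> h; rewrite /qofnat modn_small. Qed.

Lemma in_Zp_nat p c : (0 < p)%N -> in_Zp p (qofnat p c).
Proof. by move=> hp; split; [apply: is_Qp_nat | rewrite /qofnat /= modn1]. Qed.

Lemma Qp_rng p x n : is_Qp p x -> 0 <= x n < ppow p n.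
Proof. by move=> hx; rewrite (Qp_ge0 _ hx) (Qp_lt _ hx). Qed.

Lemma ball_lev p a k x : (0 < p)%N -> is_Qp p a -> ball p a k x -> is_Qp p x /\ x k = a k.
Proof.
move=> hp ha [z [[hz hz0] ->]]; split.
  by apply: is_Qp_add => //; apply: is_Qp_scale.
by rewrite qaddE qscaleE subrr hz0 mulr0 addm0 // Qp_rng.
Qed.

Lemma lev_ball p a k x : (0 < p)%N -> is_Qp p a -> is_Qp p x -> x k = a k -> ball p a k x.
Proof.
move=> hp ha hx e; exists (qscale p (- k) (qsub p x a)); split.
  split; first by apply: is_Qp_scale => //; apply: is_Qp_sub.
  by rewrite qscaleE sub0r opprK qsubE e addm_oppv ?mulr0 // Qp_rng.
apply: functional_extensionality => n.
rewrite qaddE !qscaleE opprK subrK mulrA -ppowD // subrr ppow0 mul1r qsubE.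
by rewrite addm_oppK' // Qp_rng.
Qed.

Lemma Zval_lt n (h : (1 < n)%N) (c : 'Z_n) : (val c < n)%N.
Proof. have := ltn_ord c; rewrite [\val c]/=; move: (nat_of_ord c) => m; by rewrite Zp_cast. Qed.

Lemma OmegaE p gamma (C : {set 'Z_(p ^ gamma)%N}) w : (0 < p)%N -> (1 < p ^ gamma)%N ->
  Omega p gamma C w <-> is_Qp p w /\ exists c, c \in C /\ w gamma = (val c)%:R.
Proof.
move=> hp hg; split.
  move=> [c [hc hb]]; have [hw e] := ball_lev hp (is_Qp_nat (val c) hp) hb.
  by split => //; exists c; split => //; rewrite e qofnat_lev // Zval_lt.
move=> [hw [c [hc e]]]; exists c; split => //; apply: lev_ball => //.
  exact: is_Qp_nat.
by rewrite e qofnat_lev // Zval_lt.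
Qed.

Lemma Zval_add n (h : (1 < n)%N) (a b : 'Z_n) : val (a + b) = ((val a + val b) %% n)%N.
Proof. by rewrite /= [X in (_ %% X)%N]Zp_cast // 1?[X in (X - _)%N]Zp_cast. Qed.

Lemma Zval_opp n (h : (1 < n)%N) (a : 'Z_n) : val (- a) = ((n - val a) %% n)%N.
Proof. by rewrite /= [X in (_ %% X)%N]Zp_cast // 1?[X in (X - _)%N]Zp_cast. Qed.

Lemma addm_Z n (h : (1 < n)%N) (a b : 'Z_n) :
  addm n%:R (val a)%:R (val b)%:R = (val (a + b))%:R.
Proof.
rewrite Zval_add // /addm -natrD ltr_nat.
have ha := Zval_lt h a; have hb := Zval_lt h b.
case: ltnP => hab; first by rewrite modn_small.
have -> : (val a + val b = (val a + val b - n) + n)%N by rewrite subnK.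
by rewrite modnDr modn_small ?natrD ?addrK //; lia.
Qed.

Lemma oppm_Z n (h : (1 < n)%N) (a : 'Z_n) : oppm n%:R (val a)%:R = (val (- a))%:R.
Proof.
rewrite Zval_opp // /oppm pnatr_eq0.
have ha := Zval_lt h a.
case: eqP => [->|hne]; first by rewrite subn0 modnn.
by rewrite modn_small ?natrB //; [apply: ltnW | lia].
Qed.

Lemma int_nat (x : rat) : x \is a Num.int -> 0 <= x -> exists m : nat, x = m%:R.
Proof. by move=> xi x0; apply/natrP; rewrite -intrEge0. Qed.

Lemma int_nat_lt (x : rat) n : x \is a Num.int -> 0 <= x < n%:R ->
  exists m : nat, (m < n)%N /\ x = m%:R.
Proof.
move=> xi /andP[x0 xn]; have [m em] := int_nat xi x0.
by exists m; split => //; rewrite -(ltr_nat rat) -em.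
Qed.

Definition child p (c : Qpseq) (j : int) (e : nat) : Qpseq :=
  canon p (c j + e%:R * ppow p j).

Lemma child_Qp p c j e : (0 < p)%N -> is_Qp p c -> is_Qp p (child p c j e).
Proof.
move=> hp hc; apply: is_Qp_canon => //; apply: Zinvp_add; first exact: QpZ.
by apply: Zinvp_mul; [apply: Zinvp_int; apply: nat_int | apply: Zinvp_ppow].
Qed.

Lemma child_j p c j e : (0 < p)%N -> is_Qp p c -> child p c j e j = c j.
Proof.
move=> hp hc; rewrite /child /canon mulrC modq_shift ?nat_int ?ppow_gt0 //.
by rewrite modq_small // Qp_rng.
Qed.

Lemma child_low p c j e l : (0 < p)%N -> is_Qp p c -> l <= j -> child p c j e l = c l.
Proof.
move=> hp hc hl; apply: (Qp_agree hp (child_Qp j e hp hc) hc hl).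
exact: child_j.
Qed.

Lemma child_j1 p c j e : (0 < p)%N -> is_Qp p c -> (e < p)%N ->
  child p c j e (j + 1) = c j + e%:R * ppow p j.
Proof.
move=> hp hc he; rewrite /child /canon modq_small //.
have h1 := Qp_rng j hc; have h2 := @ppow_gt0 p j hp.
have h3 : (e%:R : rat) + 1 <= p%:R by rewrite natr1 ler_nat.
have h4 : 0 <= (e%:R : rat) * ppow p j by apply: mulr_ge0; [exact: ler0n | exact: ltW].
have : (e%:R + 1) * ppow p j <= p%:R * ppow p j by rewrite ler_pM2r.
rewrite ppowS //; case/andP: h1 => ? ?; move=> ?; apply/andP; split; nra.
Qed.

Lemma Qp_digit p a j : (0 < p)%N -> is_Qp p a ->
  exists b : nat, (b < p)%N /\ a (j + 1) = a j + b%:R * ppow p j.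
Proof.
move=> hp ha.
have hP := @ppow_gt0 p j hp.
have [b [hb eb]] : exists b : nat, (b < p)%N /\ (a (j + 1) - a j) / ppow p j = b%:R.
  apply: int_nat_lt; first exact: Qp_cong.
  set beta := (a (j + 1) - a j) / ppow p j.
  have eb : a (j + 1) - a j = beta * ppow p j by rewrite /beta divfK ?gt_eqF.
  have h1 := Qp_rng j ha; have h2 := Qp_rng (j + 1) ha; rewrite ppowS // in h2.
  case/andP: h1 => ? ?; case/andP: h2 => ? ?.
  have l1 : -1 * ppow p j < beta * ppow p j by rewrite -eb; lra.
  have l2 : beta * ppow p j < p%:R * ppow p j by rewrite -eb; lra.
  rewrite ltr_pM2r // in l1; rewrite ltr_pM2r // in l2.
  rewrite l2 andbT; apply: int_lt1; [exact: intr_int 0 | exact: Qp_cong | lra].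
exists b; split => //; rewrite -eb; field; exact: ppow_ne0.
Qed.

Lemma child_count p c a j (w : rat) : (0 < p)%N -> is_Qp p c -> is_Qp p a ->
  \sum_(e < p) (if child p c j e (j + 1) == a (j + 1) then w else 0)
  = if a j == c j then w else 0.
Proof.
move=> hp hc ha; case: eqP => [eac|neac].
  have [b [hb eb]] := Qp_digit j hp ha.
  rewrite (bigD1 (Ordinal hb)) //= child_j1 // eb eac eqxx big1 ?addr0 //.
  move=> e /eqP hne; rewrite child_j1 // ?ltn_ord //.
  case: eqP => // h; exfalso; apply: hne; apply: val_inj => /=.
  have : (e%:R : rat) * ppow p j = b%:R * ppow p j by lra.
  by move/(mulIf (ppow_ne0 j hp))/eqP; rewrite eqr_nat => /eqP.
rewrite big1 // => e _; case: eqP => // h; exfalso; apply: neac.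
rewrite -(child_j j e hp hc); apply: (Qp_agree hp ha (child_Qp j e hp hc) (lerDl j 1)).
by rewrite h.
Qed.

Definition wt p (a : nat -> Qpseq) (k : nat -> int) (i : nat) (c : Qpseq) (j : int) : rat :=
  if k i <= j then (if c (k i) == a i (k i) then ppow p (- j) else 0)
  else (if a i j == c j then ppow p (- k i) else 0).

Lemma wt_ge0 p a k i c j : (0 < p)%N -> 0 <= wt p a k i c j.
Proof. by move=> hp; rewrite /wt; repeat case: ifP => _; rewrite ?lexx ?ltW ?ppow_gt0. Qed.

Lemma wt_le p a k i c j : (0 < p)%N -> wt p a k i c j <= ppow p (- k i).
Proof.
move=> hp; rewrite /wt; case: ifP => hk.
  case: ifP => _; last by rewrite ltW ?ppow_gt0.
  by apply: ppow_le => //; rewrite lerN2.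
by case: ifP => _; rewrite ?lexx ?ltW ?ppow_gt0.
Qed.

Lemma ppow_split p j : (0 < p)%N -> ppow p (- j) = ppow p (- (j + 1)) *+ p.
Proof.
move=> hp; rewrite -mulr_natr -ppow1 -ppowD //; congr ppow; ring.
Qed.

Lemma wt_split p a k i c j : (0 < p)%N -> is_Qp p c -> is_Qp p (a i) ->
  wt p a k i c j = \sum_(e < p) wt p a k i (child p c j e) (j + 1).
Proof.
move=> hp hc ha; rewrite /wt.
case: (lerP (k i) j) => hkj.
  have hkj1 : k i <= j + 1 by apply: le_trans hkj _; rewrite lerDl.
  under eq_bigr => e _ do rewrite hkj1 child_low //.
  rewrite sumr_const card_ord; case: eqP => _; last by rewrite mul0rn.
  exact: ppow_split.
case: (lerP (k i) (j + 1)) => hkj1.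
  have ek : k i = j + 1 by lia.
  rewrite ek child_count //.
under eq_bigr => e _ do rewrite eq_sym.
by rewrite child_count.
Qed.

Definition Phi p a k (m : nat) c j : rat := \sum_(i < m) wt p a k i c j.

Lemma Phi_split p a k m c j : (0 < p)%N -> is_Qp p c -> (forall i, is_Qp p (a i)) ->
  Phi p a k m c j = \sum_(e < p) Phi p a k m (child p c j e) (j + 1).
Proof.
move=> hp hc ha; rewrite /Phi exchange_big /=; apply: eq_bigr => i _.
exact: wt_split.
Qed.

Lemma Phi_mono p a k m M c j : (0 < p)%N -> (m <= M)%N -> Phi p a k m c j <= Phi p a k M c j.
Proof.
move=> hp hmM; rewrite /Phi -(subnKC hmM); elim: (M - m)%N => [|d IH].
  by rewrite addn0.
rewrite addnS big_ord_recr /=; apply: le_trans IH _; rewrite lerDl; exact: wt_ge0.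
Qed.

Lemma Phi_bound p a k m c j : (0 < p)%N -> Phi p a k m c j <= \sum_(i < m) ppow p (- k i).
Proof. by move=> hp; apply: ler_sum => i _; apply: wt_le. Qed.

Lemma Phi_ge p a k i c j : (0 < p)%N -> wt p a k i c j <= Phi p a k i.+1 c j.
Proof.
move=> hp; rewrite /Phi big_ord_recr /= lerDr; apply: sumr_ge0 => l _; exact: wt_ge0.
Qed.

Definition Good p a k c j := forall m, Phi p a k m c j < ppow p (- j).

Lemma Good_step p a k c j : (0 < p)%N -> is_Qp p c -> (forall i, is_Qp p (a i)) ->
  Good p a k c j -> exists e, (e < p)%N /\ Good p a k (child p c j e) (j + 1).
Proof.
move=> hp hc ha hg; apply: NNPP => hn.
have H : forall e : 'I_p, exists m, ppow p (- (j + 1)) <= Phi p a k m (child p c j e) (j + 1).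
  move=> e; apply: NNPP => h1; apply: hn; exists e; split => // m.
  rewrite ltNge; apply/negP => h2; apply: h1; by exists m.
pose f := fun e : 'I_p => proj1_sig (constructive_indefinite_description _ (H e)).
have hf : forall e, ppow p (- (j + 1)) <= Phi p a k (f e) (child p c j e) (j + 1).
  by move=> e; rewrite /f; case: constructive_indefinite_description.
pose M := (\max_(e < p) f e)%N.
have := hg M; rewrite (Phi_split _ _ _ hp hc ha) ltNge => /negP; apply.
rewrite (ppow_split j hp).
have -> : ppow p (- (j + 1)) *+ p = \sum_(e < p) ppow p (- (j + 1)) by rewrite sumr_const card_ord.
apply: ler_sum => e _; apply: le_trans (hf e) _; apply: Phi_mono => //.
exact: (leq_bigmax_cond (F := f)).
Qed.

Lemma ex_pick p a k c j : exists e : nat, (0 < p)%N -> is_Qp p c -> (forall i, is_Qp p (a i)) ->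
  (e < p)%N /\ (Good p a k c j -> Good p a k (child p c j e) (j + 1)).
Proof.
case: (classic ((0 < p)%N /\ is_Qp p c /\ (forall i, is_Qp p (a i)) /\ Good p a k c j)).
  move=> [hp [hc [ha hg]]]; have [e [he hg']] := Good_step hp hc ha hg.
  by exists e => _ _ _; split.
move=> hn; exists 0%N => hp hc ha; split => // hg; exfalso; apply: hn; tauto.
Qed.

Definition pickE p a k c j : nat := proj1_sig (constructive_indefinite_description _ (ex_pick p a k c j)).

Lemma pickE_spec p a k c j : (0 < p)%N -> is_Qp p c -> (forall i, is_Qp p (a i)) ->
  (pickE p a k c j < p)%N /\
  (Good p a k c j -> Good p a k (child p c j (pickE p a k c j)) (j + 1)).
Proof. by rewrite /pickE; case: constructive_indefinite_description => e H; apply: H. Qed.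

Fixpoint cs p a k (d : Qpseq) (K : int) (n : nat) : Qpseq :=
  match n with
  | 0%N => d
  | n'.+1 => let c := cs p a k d K n' in child p c (K + n') (pickE p a k c (K + n'))
  end.

Lemma cs_Qp p a k d K n : (0 < p)%N -> is_Qp p d -> is_Qp p (cs p a k d K n).
Proof. by move=> hp hd; elim: n => [|n IH] //=; apply: child_Qp. Qed.

Lemma cs_good p a k d K n : (0 < p)%N -> is_Qp p d -> (forall i, is_Qp p (a i)) ->
  Good p a k d K -> Good p a k (cs p a k d K n) (K + n).
Proof.
move=> hp hd ha hg; elim: n => [|n IH]; first by rewrite addr0.
have [_ h] := @pickE_spec p a k (cs p a k d K n) (K + n) hp (@cs_Qp p a k d K n hp hd) ha.
by rewrite /= -addn1 PoszD addrA; apply: h.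
Qed.

Lemma cs_agree p a k d (K : int) n m (l : int) : (0 < p)%N -> is_Qp p d -> (n <= m)%N -> l <= K + n ->
  cs p a k d K m l = cs p a k d K n l.
Proof.
move=> hp hd hnm hl; rewrite -(subnKC hnm); elim: (m - n)%N => [|e IH]; first by rewrite addn0.
rewrite addnS /= child_low //; first exact: cs_Qp.
by apply: le_trans hl _; rewrite PoszD addrA lerDl.
Qed.

Definition climit p a k d K : Qpseq := fun l => cs p a k d K (absz (l - K)) l.

Lemma climit_eq p a k d (K : int) (n : nat) (l : int) : (0 < p)%N -> is_Qp p d -> l <= K + n ->
  climit p a k d K l = cs p a k d K n l.
Proof.
move=> hp hd hl; rewrite /climit.
have hl' : l <= K + (absz (l - K))%:Z.
  by rewrite -lerBlDl; case: (l - K) => [m|m] //=; rewrite ?lexx.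
have hmin : l <= K + (minn (absz (l - K)) n)%N.
  by case: leqP => _; [apply: hl' | apply: hl].
rewrite (@cs_agree p a k d K (minn (absz (l - K)) n) (absz (l - K)) l hp hd (geq_minl _ _) hmin).
by rewrite (@cs_agree p a k d K (minn (absz (l - K)) n) n l hp hd (geq_minr _ _) hmin).
Qed.

Lemma climit_Qp p a k d K : (0 < p)%N -> is_Qp p d -> is_Qp p (climit p a k d K).
Proof.
move=> hp hd.
have ce := fun n l (h : l <= K + n%:Z) => @climit_eq p a k d K n l hp hd h.
have hcs := fun n => @cs_Qp p a k d K n hp hd.
have big : forall l : int, exists n : nat, l + 1 <= K + n.
  move=> l; exists (absz (l + 1 - K)%R); rewrite -lerBlDl.
  by case: (l + 1 - K) => [m|m] //=; rewrite ?lexx.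
split.
- move=> l; have [n hn] := big l.
  rewrite (ce n l (le_trans (lerDl l 1) hn)); exact: QpZ.
- move=> l; have [n hn] := big l.
  rewrite (ce n l (le_trans (lerDl l 1) hn)); exact: Qp_rng.
- move=> l; have [n hn] := big l.
  rewrite (ce n l (le_trans (lerDl l 1) hn)) (ce n (l + 1) hn).
  exact: Qp_cong.
- have hd' := hd; case: hd' => _ _ _ [N hN]; exists (Num.min N K) => l hl.
  have hlK : l <= K + (0%N : int) by rewrite addr0; apply: le_trans hl _; rewrite ge_min lexx orbT.
  rewrite (ce 0%N l hlK) /=; apply: hN; apply: le_trans hl _; rewrite ge_min lexx //.
Qed.

Lemma nonnull p N d K : (0 < p)%N -> haar_null p N -> is_Qp p d ->
  exists x, [/\ is_Qp p x, x K = d K & ~ N x].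
Proof.
move=> hp hN hd.
have hK := @ppow_gt0 p (- K) hp.
have heps : 0 < ppow p (- K) / 2 by rewrite divr_gt0.
have [a [k [ha hcov hsum]]] := hN _ heps.
have hg : Good p a k d K.
  move=> m; apply: le_lt_trans (Phi_bound a k m d K hp) _.
  apply: le_lt_trans (hsum m) _; lra.
have ce := fun n l (h : l <= K + n%:Z) => @climit_eq p a k d K n l hp hd h.
exists (climit p a k d K); split.
- exact: climit_Qp.
- by rewrite (ce 0%N K) ?addr0.
move=> hNx; have [i hi] := hcov _ hNx.
have [_ e] := ball_lev hp (ha i) hi.
pose n := absz (k i - K)%R.
have hkn : k i <= K + n%:Z.
  by rewrite -lerBlDl /n; case: (k i - K) => [m|m] //=; rewrite ?lexx.
have gd := @cs_good p a k d K n hp hd ha hg (i.+1).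
have := @Phi_ge p a k i (cs p a k d K n) (K + n) hp.
rewrite /wt hkn -(ce n (k i) hkn) e eqxx => h.
have := le_lt_trans h gd; rewrite ltxx //.
Qed.

Lemma ppow_gam p (gamma : nat) : ppow p gamma = (p ^ gamma)%N%:R.
Proof. by rewrite ppow_nat natrX. Qed.

Lemma Zof n (h : (1 < n)%N) m : (m < n)%N -> exists X : 'Z_n, val X = m.
Proof. by move=> hm; exists (m%:R); apply: (etrans (val_Zp_nat h m)); rewrite modn_small. Qed.

Lemma int_lev_Z p gamma (x : Qpseq) : (1 < p ^ gamma)%N -> (0 < p)%N -> is_Qp p x ->
  x gamma \is a Num.int -> exists X : 'Z_(p ^ gamma)%N, x gamma = (val X)%:R.
Proof.
move=> hn hp hx hi; have := Qp_rng gamma hx; rewrite ppow_gam => hr.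
have [m [hm em]] := int_nat_lt hi hr.
by have [X eX] := Zof hn hm; exists X; rewrite eX.
Qed.

Lemma Zp_lev_int p (gamma : nat) x : (0 < p)%N -> is_Qp p x -> x 0 = 0 -> x gamma \is a Num.int.
Proof.
move=> hp hx h0; have := Qp_down hp hx (isT : (0:int) <= gamma%:Z); rewrite h0 ppow0 => e.
have := modq_diff (x gamma) ltr01; rewrite -e subr0 divr1 //.
Qed.

Lemma lev_Zp0 p (gamma : nat) x : (0 < p)%N -> is_Qp p x -> x gamma \is a Num.int -> x 0 = 0.
Proof.
move=> hp hx hi; rewrite (Qp_down hp hx (isT : (0:int) <= gamma%:Z)) ppow0.
by rewrite -[x gamma]add0r -[x gamma]mul1r modq_shift ?modq0.
Qed.

Lemma sub_lev p (gamma : nat) (x t : Qpseq) (X S : 'Z_(p ^ gamma)%N) : (1 < p ^ gamma)%N ->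
  x gamma = (val X)%:R -> t gamma = (val S)%:R -> qsub p x t gamma = (val (X - S))%:R.
Proof. by move=> hn ex et; rewrite qsubE ex et ppow_gam oppm_Z // addm_Z. Qed.

Lemma add_lev p (gamma : nat) (x t : Qpseq) (X S : 'Z_(p ^ gamma)%N) : (1 < p ^ gamma)%N ->
  x gamma = (val X)%:R -> t gamma = (val S)%:R -> qadd p x t gamma = (val (X + S))%:R.
Proof. by move=> hn ex et; rewrite qaddE ex et ppow_gam addm_Z. Qed.

Lemma Zval_eq n (X Y : 'Z_n) : (val X)%:R = (val Y)%:R :> rat -> X = Y.
Proof. by move/eqP; rewrite eqr_nat => /eqP e; apply: val_inj. Qed.

Lemma qadd_sub p x t : (0 < p)%N -> is_Qp p x -> is_Qp p t -> qadd p (qsub p x t) t = x.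
Proof.
move=> hp hx ht; apply: functional_extensionality => n.
by rewrite qaddE qsubE addm_oppK // Qp_rng.
Qed.

Definition pb (P : Prop) : bool := if excluded_middle_informative P then true else false.
Lemma pbE P : pb P <-> P.
Proof. by rewrite /pb; case: excluded_middle_informative. Qed.

Lemma dir_mod_Zp p (gamma : nat) (C : {set 'Z_(p ^ gamma)%N}) : (0 < p)%N -> (1 < p ^ gamma)%N ->
  tiles_Zmod (p ^ gamma)%N C -> tiles_Zp p (Omega p gamma C).
Proof.
move=> hp hn [S hS].
exists (fun t => exists s, s \in S /\ t = qofnat p (val s)); split.
- by move=> t [s [_ ->]]; apply: in_Zp_nat.
- move=> t w [s [_ ->]] /(OmegaE _ _ hp hn) [hw [c [_ ec]]]; split.
    by apply: is_Qp_add => //; apply: is_Qp_nat.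
  rewrite qaddE (@lev_Zp0 p gamma w hp hw) /qofnat /= ?modn1 ?addm0 ?ppow0 //.
  by rewrite ec nat_int.
- move=> x [hx hx0].
  have [X eX] := int_lev_Z hn hp hx (Zp_lev_int gamma hp hx hx0).
  have [[c s] [[/= hc hs eXcs] hu]] := hS X.
  have hts : qofnat p (val s) gamma = (val s)%:R by rewrite qofnat_lev // Zval_lt.
  exists (qofnat p (val s)); split.
    split; first by exists s.
    exists (qsub p x (qofnat p (val s))); split.
      apply/(OmegaE _ _ hp hn); split; first by apply: is_Qp_sub => //; apply: is_Qp_nat.
      exists c; split => //; rewrite (sub_lev hn eX hts) eXcs addrK //.
    by rewrite qadd_sub //; apply: is_Qp_nat.
  move=> t' [[s' [hs' ->]] [w' [/(OmegaE _ _ hp hn) [hw' [c' [hc' ec']]] ex]]].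
  have hts' : qofnat p (val s') gamma = (val s')%:R by rewrite qofnat_lev // Zval_lt.
  have e2 := add_lev hn ec' hts'; rewrite -ex eX in e2.
  have e3 : (c, s) = (c', s') by apply: hu; split => //; apply: Zval_eq.
  by case: e3 => _ ->.
Qed.

Lemma dir_Zp_mod p (gamma : nat) (C : {set 'Z_(p ^ gamma)%N}) : (0 < p)%N -> (1 < p ^ gamma)%N ->
  tiles_Zp p (Omega p gamma C) -> tiles_Zmod (p ^ gamma)%N C.
Proof.
move=> hp hn [T [hT _ hx]].
exists [set s | pb (exists t, T t /\ t gamma = (val s)%:R)] => X.
have hxX : in_Zp p (qofnat p (val X)) by apply: in_Zp_nat.
have eX : qofnat p (val X) gamma = (val X)%:R by rewrite qofnat_lev // Zval_lt.
have [t [[Tt [w [/(OmegaE _ _ hp hn) [hw [c [hc ec]]] ex]]] hu]] := hx _ hxX.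
have [ht ht0] := hT t Tt.
have [s es] := int_lev_Z hn hp ht (Zp_lev_int gamma hp ht ht0).
have eXcs : X = c + s by apply: Zval_eq; rewrite -(add_lev hn ec es) -ex eX.
exists (c, s); split.
  split => //=; rewrite inE; apply/pbE; by exists t.
move=> [c' s'] [/= hc' /[1!inE] /pbE [t' [Tt' et']] eX'].
have [ht' _] := hT t' Tt'.
have e1 : t = t'.
  apply: hu; split => //; exists (qsub p (qofnat p (val X)) t'); split.
    apply/(OmegaE _ _ hp hn); split; first by apply: is_Qp_sub => //; apply: is_Qp_nat.
    by exists c'; split => //; rewrite (sub_lev hn eX et') eX' addrK.
  by rewrite qadd_sub //; apply: is_Qp_nat.
have ess : s = s' by apply: Zval_eq; rewrite -es -et' e1.
by rewrite ess; congr pair; apply: (addIr s'); rewrite -ess -eXcs eX' ess.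
Qed.

Lemma addm_int_inv P u v w : P \is a Num.int -> u \is a Num.int -> w \is a Num.int ->
  addm P u (oppm P v) = w -> v \is a Num.int.
Proof.
move=> hP hu hw; have [e1 ->] := oppm_eps P v; have [e2 ->] := addm_eps P u (e1%:R * P - v).
move=> e.
have -> : v = u + e1%:R * P - e2%:R * P - w by rewrite -e; ring.
by isint.
Qed.

Lemma dir_Qp_mod p (gamma : nat) (C : {set 'Z_(p ^ gamma)%N}) : (0 < p)%N -> (1 < p ^ gamma)%N ->
  tiles_Qp p (Omega p gamma C) -> tiles_Zmod (p ^ gamma)%N C.
Proof.
move=> hp hn [T [hT hN]].
exists [set s | pb (exists t, T t /\ t gamma = (val s)%:R)] => X.
have [x [hx exX hNx]] := @nonnull p _ (qofnat p (val X)) gamma hp hN (is_Qp_nat (val X) hp).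
have eX : x gamma = (val X)%:R by rewrite exX qofnat_lev // Zval_lt.
have : exists! t, T t /\ Omega p gamma C (qsub p x t).
  by apply: NNPP => h; apply: hNx; split.
move=> [t [[Tt /(OmegaE _ _ hp hn) [hw [c [hc ec]]]] hu]].
have ht := hT t Tt.
have hti : t gamma \is a Num.int.
  apply: (@addm_int_inv (ppow p gamma) (x gamma) _ (val c)%:R).
  - by rewrite ppow_gam nat_int.
  - by rewrite eX nat_int.
  - exact: nat_int.
  by rewrite -qsubE.
have [s es] := int_lev_Z hn hp ht hti.
have eXcs : X = c + s.
  have : c = X - s by apply: Zval_eq; rewrite -ec (sub_lev hn eX es).
  by move=> ->; rewrite subrK.
exists (c, s); split.
  split => //=; rewrite inE; apply/pbE; by exists t.
move=> [c' s'] [/= hc' /[1!inE] /pbE [t' [Tt' et']] eX'].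
have ht' := hT t' Tt'.
have e1 : t = t'.
  apply: hu; split => //; apply/(OmegaE _ _ hp hn); split; first exact: is_Qp_sub.
  by exists c'; split => //; rewrite (sub_lev hn eX et') eX' addrK.
have ess : s = s' by apply: Zval_eq; rewrite -es -et' e1.
by rewrite ess; congr pair; apply: (addIr s'); rewrite -ess -eXcs eX' ess.
Qed.

Lemma small_pow p (eps : rat) : (1 < p)%N -> 0 < eps -> exists K : nat, ppow p (- K%:Z) <= eps.
Proof.
move=> hp1 he; have hp : (0 < p)%N by apply: ltn_trans hp1.
pose K := absz (Num.ceil (eps^-1)); exists K.
have hi : 0 < eps^-1 by rewrite invr_gt0.
have hc0 : 0 <= Num.ceil (eps^-1) by rewrite ceil_ge0; lra.
have hK : eps^-1 <= K%:R by rewrite /K natr_absz ger0_norm // ?ceil_ge.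
have hKp : (K%:R : rat) < (p ^ K)%N%:R by rewrite ltr_nat ltn_expl.
rewrite ppowN // ppow_nat -natrX -[eps]invrK lef_pV2 ?posrE ?invr_gt0 ?ltr0n ?expn_gt0 ?hp //.
  by apply: ltW; apply: le_lt_trans hK hKp.
Qed.

Lemma haar_null_empty p (N : Qpseq -> Prop) : (1 < p)%N -> (forall x, ~ N x) -> haar_null p N.
Proof.
move=> hp1 hN eps he; have hp : (0 < p)%N by apply: ltn_trans hp1.
have [K hK] := small_pow hp1 he.
exists (fun _ => qofnat p 0), (fun i => K%:Z + (i.+1)%:Z); split.
- by move=> i; apply: is_Qp_nat.
- by move=> x /hN.
have claim : forall m, \sum_(i < m) ppow p (- (K%:Z + (i.+1)%:Z)) + ppow p (- (K%:Z + m%:Z)) <= ppow p (- K%:Z).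
  elim => [|m IH]; first by rewrite big_ord0 add0r addr0.
  rewrite big_ord_recr /=; apply: le_trans IH; rewrite -addrA lerD2l.
  rewrite (ppow_split (K%:Z + m%:Z) hp).
  have -> : (K%:Z + (m.+1)%:Z) = K%:Z + m%:Z + 1 by rewrite -addn1 PoszD addrA.
  set y := ppow p _.
  have y0 : 0 <= y by rewrite ltW ?ppow_gt0.
  rewrite -mulr2n -[y *+ 2]mulr_natr -[y *+ p]mulr_natr; apply: ler_wpM2l => //; rewrite ler_nat; exact: hp1.
move=> m; apply: le_trans hK; apply: le_trans (claim m); rewrite lerDl ltW ?ppow_gt0 //.
Qed.

Lemma addm_shift P r a b : 0 <= r < 1 -> 0 <= a -> 0 <= b -> r + a < P -> r + b < P ->
  addm P (r + a) (oppm P (r + b)) = addm P a (oppm P b).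
Proof. move=> /andP[? ?] ? ? ? ?; splitm; subst; lra. Qed.

Lemma frac_eq P r r' a b v : P \is a Num.int -> a \is a Num.int -> b \is a Num.int ->
  v \is a Num.int -> 0 <= r < 1 -> 0 <= r' < 1 ->
  addm P (r + a) (oppm P (r' + b)) = v -> r = r'.
Proof.
move=> hP ha hb hv /andP[? ?] /andP[? ?].
have [e1 ->] := oppm_eps P (r' + b); have [e2 ->] := addm_eps P (r + a) (e1%:R * P - (r' + b)).
move=> e.
have hi : r - r' \is a Num.int.
  have -> : r - r' = v - a + b - e1%:R * P + e2%:R * P by rewrite -e; ring.
  by isint.
have h1 : -1 < r - r' < 1 by apply/andP; split; lra.
by have := int_eq0 hi h1; lra.
Qed.

Lemma canon_lev p (gamma : nat) r (s : nat) : (0 < p)%N -> 0 <= r < 1 -> (s < p ^ gamma)%N ->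
  canon p (r + s%:R) gamma = r + s%:R.
Proof.
move=> hp /andP[? ?] hs; rewrite /canon modq_small // ppow_gam.
have : (s%:R : rat) + 1 <= (p ^ gamma)%N%:R by rewrite natr1 ler_nat.
have : (0 : rat) <= s%:R by exact: ler0n.
move=> ? ?; apply/andP; split; lra.
Qed.

Lemma dir_mod_Qp p (gamma : nat) (C : {set 'Z_(p ^ gamma)%N}) : (1 < p)%N -> (1 < p ^ gamma)%N ->
  tiles_Zmod (p ^ gamma)%N C -> tiles_Qp p (Omega p gamma C).
Proof.
move=> hp1 hn [S hS]; have hp : (0 < p)%N by apply: ltn_trans hp1.
exists (fun t => exists r s, [/\ s \in S, 0 <= r < 1, Zinvp p r & t = canon p (r + (val s)%:R)]).
split.
  move=> t [r [s [_ _ hr ->]]]; apply: is_Qp_canon => //; apply: Zinvp_add => //.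
  by apply: Zinvp_int; apply: nat_int.
apply: haar_null_empty => // x [hx hnu]; apply: hnu.
pose r := x 0.
have hr : 0 <= r < 1 by rewrite -(ppow0 p) Qp_rng.
have hrZ : Zinvp p r := QpZ 0 hx.
have hPi : ppow p gamma \is a Num.int by rewrite ppow_gam nat_int.
have [m [hm em]] : exists m : nat, (m < p ^ gamma)%N /\ x gamma - r = m%:R.
  apply: int_nat_lt.
    have := modq_diff (x gamma) ltr01.
    by rewrite -(ppow0 p) -(Qp_down hp hx (isT : (0:int) <= gamma%:Z)) divr1.
  have := Qp_rng gamma hx; rewrite ppow_gam; case/andP: hr => ? ? /andP[? ?].
  apply/andP; split; last by lra.
  apply: int_lt1; [exact: intr_int 0 | | lra].
  have := modq_diff (x gamma) ltr01.
  by rewrite -(ppow0 p) -(Qp_down hp hx (isT : (0:int) <= gamma%:Z)) divr1.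
have [X eX] := Zof hn hm.
have exX : x gamma = r + (val X)%:R by rewrite eX -em; ring.
have hXn := Zval_lt hn X.
have [[c s] [[/= hc hs eXcs] hu]] := hS X.
have bs : forall s' : 'Z_(p ^ gamma)%N, r + (val s')%:R < ppow p gamma.
  move=> s'; rewrite ppow_gam.
  have : (val s')%:R + 1 <= (p ^ gamma)%N%:R :> rat by rewrite natr1 ler_nat Zval_lt.
  case/andP: hr => ? ?; lra.
have key : forall r' (s' : 'Z_(p ^ gamma)%N), 0 <= r' < 1 ->
    Omega p gamma C (qsub p x (canon p (r' + (val s')%:R))) ->
    r' = r /\ exists c', c' \in C /\ X = c' + s'.
  move=> r' s' hr' /(OmegaE _ _ hp hn) [_ [c' [hc' ec']]].
  move: ec'; rewrite qsubE canon_lev ?Zval_lt // exX => ec'.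
  have er : r = r'.
    apply: (frac_eq hPi _ _ _ hr hr' ec'); exact: nat_int.
  split => //; exists c'; split => //.
  move: ec'; rewrite -er addm_shift ?ler0n ?bs //.
  rewrite ppow_gam oppm_Z // addm_Z // => /Zval_eq <-; by rewrite subrK.
have hZ : forall s' : 'Z_(p ^ gamma)%N, Zinvp p (r + (val s')%:R).
  by move=> s'; apply: Zinvp_add => //; apply: Zinvp_int; apply: nat_int.
exists (canon p (r + (val s)%:R)); split.
  split; first by exists r, s; split.
  apply/(OmegaE _ _ hp hn); split; first by apply: is_Qp_sub => //; apply: is_Qp_canon.
  exists c; split => //; rewrite qsubE canon_lev ?Zval_lt // exX addm_shift ?ler0n ?bs //.
  by rewrite ppow_gam oppm_Z // addm_Z // eXcs addrK.
move=> t' [[r' [s' [hs' hr' _ ->]]] hO].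
have [er [c' [hc' eX']]] := key r' s' hr' hO.
have e3 : (c, s) = (c', s') by apply: hu; split.
by case: e3 => _ ->; rewrite er.
Qed.

Unset Implicit Arguments.
Theorem lemma2p10 (p : nat) (hp : prime p) (gamma : nat) (hg : (1 <= gamma)%N)
  (C : {set 'Z_(p ^ gamma)%N}) (hC : C != set0) :
  (tiles_Zp p (Omega p gamma C) <-> tiles_Zmod (p ^ gamma)%N C) /\
  (tiles_Zmod (p ^ gamma)%N C <-> tiles_Qp p (Omega p gamma C)).
Proof.
have hp0 := prime_gt0 hp; have hp1 := prime_gt1 hp.
have hn : (1 < p ^ gamma)%N by apply: leq_ltn_trans hg (ltn_expl _ hp1).
split; split.
- exact: dir_Zp_mod.
- exact: dir_mod_Zp.
- exact: dir_mod_Qp.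
- exact: dir_Qp_mod.
Qed.
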